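(* For every finite tree $T$, the dominating ideal $DI(T)$ is normally torsion-free.
   Context: For a simple graph $G$, $N_G[i]=\{j:\{i,j\}\in E(G)\}\cup\{i\}$. A set $S\subseteq V(G)$ is a dominating set if $S\cap N_G[v]\ne\emptyset$ for all $v\in V(G)$; it is minimal if it contains no other dominating set properly. With a variable $x_j$ per vertex in a polynomial ring over a field $K$, $DI(G)=(\prod_{i\in S}x_i : S \text{ a minimal dominating set of } G)$. An ideal $I$ is normally torsion-free if $\mathrm{Ass}(R/I^k)\subseteq\mathrm{Ass}(R/I)$ for all $k\ge1$. *)

(* Defs.v *)
From HB Require Import structures.
From mathcomp Require Import all_boot all_order all_algebra.
From mathcomp Require Import mpoly.
Set Implicit Arguments. Unset Strict Implicit. Unset Printing Implicit Defensive.
Import GRing.Theory.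
Local Open Scope ring_scope.

Definition simple_graph (n : nat) (e : rel 'I_n) : Prop :=
  (forall x y, e x y = e y x) /\ (forall x, e x x = false).

Definition acyclic (n : nat) (e : rel 'I_n) : Prop :=
  ~ (exists s : seq 'I_n, [/\ (3 <= size s)%N, uniq s & cycle e s]).

Definition connected (n : nat) (e : rel 'I_n) : Prop :=
  forall x y : 'I_n, connect e x y.

Definition is_tree (n : nat) (e : rel 'I_n) : Prop :=
  [/\ simple_graph e, connected e & acyclic e].

Definition dominating (n : nat) (e : rel 'I_n) (S : {set 'I_n}) : bool :=
  [forall v, [exists u in S, (u == v) || e v u]].

Definition minimal_dominating (n : nat) (e : rel 'I_n) (S : {set 'I_n}) : bool :=
  minset (dominating e) S.

Section Ideals.
Variable R : comRingType.

Definition ideal_gen (G : R -> Prop) (f : R) : Prop :=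
  exists gs cs : seq R, (forall g, g \in gs -> G g) /\
    f = \sum_(i < size gs) cs`_i * gs`_i.

Definition ideal_pow (I : R -> Prop) (k : nat) : R -> Prop :=
  ideal_gen (fun g => exists gs : seq R,
     [/\ size gs = k, (forall x, x \in gs -> I x) & g = \prod_(x <- gs) x]).

Definition is_ideal (P : R -> Prop) : Prop :=
  [/\ P 0, (forall a b, P a -> P b -> P (a + b)) & (forall r a, P a -> P (r * a))].

Definition prime_ideal (P : R -> Prop) : Prop :=
  [/\ is_ideal P, ~ P 1 & forall a b, P (a * b) -> P a \/ P b].

(* P \in Ass(R/J): P is prime and P = (J : f) for some f in R. *)
Definition associated_prime (J P : R -> Prop) : Prop :=
  prime_ideal P /\ exists f : R, forall g, P g <-> J (g * f).

Definition normally_torsion_free (I : R -> Prop) : Prop :=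
  forall k : nat, (1 <= k)%N ->
    forall P, associated_prime (ideal_pow I k) P -> associated_prime I P.
End Ideals.

Definition dominating_ideal (K : fieldType) (n : nat) (e : rel 'I_n)
  : {mpoly K[n]} -> Prop :=
  ideal_gen (fun g => exists2 S : {set 'I_n}, minimal_dominating e S &
                        g = \prod_(i in S) 'X_i).

(* Main.v *)
Require Import Defs.
From mathcomp Require Import all_boot all_order all_algebra.
From mathcomp Require Import mpoly.
From mathcomp Require Import zify ring.
From Stdlib Require Import Classical.
Set Implicit Arguments. Unset Strict Implicit. Unset Printing Implicit Defensive.
Import GRing.Theory.

Lemma min_witness (P : pred nat) : (exists j, P j) ->
  exists j, P j /\ forall j', P j' -> (j <= j')%N.
Proof. move=> H; case: (ex_minnP H) => j Pj Hmin; by exists j. Qed.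

Lemma path_fun (T : Type) (e : rel T) (w : nat -> T) :
  (forall t, e (w t) (w t.+1)) ->
  forall m i, path e (w i) (map w (iota i.+1 m)).
Proof. move=> H; elim=> [|m IH] i //=; by rewrite H IH. Qed.

Section Leaf.
Variables (n : nat) (e : rel 'I_n).
Hypothesis esym : forall x y, e x y = e y x.
Hypothesis eirr : forall x, e x x = false.
Hypothesis eac : acyclic e.

Lemma leaf_exists (U : {set 'I_n}) : U != set0 ->
  exists2 l, l \in U & forall x y, x \in U -> y \in U -> e l x -> e l y -> x = y.
Proof.
case/set0Pn => x0 Hx0.
case: (boolP [exists l in U, [forall x in U, [forall y in U, e l x ==> e l y ==> (x == y)]]]).
  case/exists_inP => l lU /forall_inP H; exists l => // x y xU yU exl eyl.
  by have := H x xU => /forall_inP /(_ y yU); rewrite exl eyl => /eqP.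
move/exists_inPn => Hn; exfalso; apply: eac.
have Hnb : forall l, l \in U -> exists a, exists b, [/\ a \in U, b \in U, e l a, e l b & a != b].
  move=> l /Hn /forall_inPn [a aU /forall_inPn [b bU]].
  rewrite negb_imply => /andP [ela]; rewrite negb_imply => /andP [elb ab].
  by exists a, b; split.
pose nxt x y := odflt x [pick z in U | e x z && (z != y)].
have Hnxt : forall x y, x \in U -> [/\ nxt x y \in U, e x (nxt x y) & nxt x y != y].
  move=> x y xU; rewrite /nxt; case: pickP => [z /andP [zU /andP [exz zy]]|H0] //=.
  exfalso; have [a [b [aU bU exa exb ab]]] := Hnb x xU.
  have := H0 a; have := H0 b; rewrite aU bU exa exb /= => /negbT; rewrite negbK => /eqP bE /negbT.
  by rewrite negbK => /eqP aE; move: ab; rewrite aE bE eqxx.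
pose fix wp (i : nat) : 'I_n * 'I_n :=
  match i with 0 => (x0, nxt x0 x0) | i.+1 => ((wp i).2, nxt (wp i).2 (wp i).1) end.
have Hwp : forall i, [/\ (wp i).1 \in U, (wp i).2 \in U & e (wp i).1 (wp i).2].
  elim=> [|i [H1 H2 H3]] /=; first by have [] := Hnxt x0 x0 Hx0.
  by have [] := Hnxt _ (wp i).1 H2.
pose w i := (wp i).1.
have wU : forall i, w i \in U by move=> i; case: (Hwp i).
have we : forall i, e (w i) (w i.+1) by move=> i; case: (Hwp i).
have w2 : forall i, w i.+2 != w i.
  by move=> i; rewrite /w /=; case: (Hwp i) => _ H2 _; case: (Hnxt _ (wp i).1 H2).
pose P := [pred j | [exists i : 'I_j, w i == w j]].
have [j [Pj Hmin]] : exists j, P j /\ forall j', P j' -> (j <= j')%N.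
  apply: min_witness.
  set s := map w (iota 0 #|U|.+1).
  have : ~~ uniq s.
    apply/negP => us; suff : (#|U|.+1 <= #|U|)%N by rewrite ltnn.
    have := uniq_leq_size us (s2 := enum U).
    rewrite size_map size_iota -cardE; apply => x /mapP [i _ ->].
    by rewrite mem_enum.
  case/(uniqPn x0) => [i [j [ij js]]]; rewrite size_map size_iota in js.
  rewrite !(nth_map 0) ?size_iota //; last by apply: ltn_trans js.
  rewrite !nth_iota ?add0n //; last by apply: ltn_trans js.
  move=> E; exists j; apply/existsP; exists (Ordinal ij); by rewrite E.
case/existsP: Pj => [[i0 Hi0]] /= /eqP Ew.
have inj : forall a b, (a < j)%N -> (b < j)%N -> w a = w b -> a = b.
  move=> a b aj bj Eab; case: (ltngtP a b) => // Hab; exfalso.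
    suff : (j <= b)%N by rewrite leqNgt bj.
    by apply: Hmin; apply/existsP; exists (Ordinal Hab); rewrite /= Eab.
  suff : (j <= a)%N by rewrite leqNgt aj.
  by apply: Hmin; apply/existsP; exists (Ordinal Hab); rewrite /= Eab.
exists (map w (iota i0 (j - i0))); split.
- rewrite size_map size_iota.
  have : (j - i0 != 1)%N.
    apply/negP => /eqP E1; have Ej : j = i0.+1 by lia.
    by move: (we i0); rewrite -Ej -Ew eirr.
  have : (j - i0 != 2)%N.
    apply/negP => /eqP E1; have Ej : j = i0.+2 by lia.
    by move: (w2 i0); rewrite -Ej -Ew eqxx.
  lia.
- rewrite map_inj_in_uniq ?iota_uniq // => a b; rewrite !mem_iota => /andP [_ Ha] /andP [_ Hb].
  apply: inj; lia.
- have -> : (j - i0 = (j - i0.+1).+1)%N by lia.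
  rewrite /= (_ : rcons _ _ = map w (iota i0.+1 (j - i0.+1).+1)).
    exact: path_fun.
  rewrite -cats1 -[(j - i0.+1).+1]addn1 iotaD map_cat /=; congr (_ ++ [:: _]).
  rewrite Ew; congr w; lia.
Qed.
End Leaf.

Section Sets.
Variable T : finType.
Implicit Types A B S X Y : {set T}.

Lemma take_set (D : {set T}) k : (k <= #|D|)%N -> exists2 X : {set T}, X \subset D & #|X| = k.
Proof.
move=> kD; exists [set x in take k (enum D)].
  by apply/subsetP => x; rewrite inE => /mem_take; rewrite mem_enum.
rewrite cardsE; apply/eqP; rewrite (card_uniqP _) ?take_uniq ?enum_uniq //.
by rewrite size_take -cardE; case: ltnP => // H; apply/eqP; apply/eqP; lia.
Qed.

Lemma fill A B t : A \subset B -> (#|A| <= t)%N -> (t <= #|B|)%N ->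
  exists S : {set T}, [/\ A \subset S, S \subset B & #|S| = t].
Proof.
move=> AB At tB.
have : (t - #|A| <= #|B :\: A|)%N.
  by rewrite cardsD (setIidPr AB); lia.
case/take_set => X XBA Xc; exists (A :|: X); split.
- exact: subsetUl.
- by rewrite subUset AB (subset_trans XBA) // subsetDl.
- rewrite cardsU Xc; suff -> : A :&: X = set0 by rewrite cards0; lia.
  apply/setP => x; rewrite !inE; case: (boolP (x \in A)) => //= xA.
  by apply/negP => /(subsetP XBA); rewrite inE xA.
Qed.

Lemma card_disjU S X : S :&: X = set0 -> #|S :|: X| = (#|S| + #|X|)%N.
Proof. by move=> H; rewrite cardsU H cards0 subn0. Qed.

Lemma pick3 (X Y : {set T}) t : Y \subset X -> (t <= #|T|)%N ->
  exists S : {set T}, [/\ #|S| = t, (minn #|T| (#|X| + t) <= #|S :|: X|)%N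
                        & (minn #|T| (#|Y| + t) <= #|S :|: Y|)%N].
Proof.
move=> YX tT.
have cX := cardsC X; have cY := cardsC Y.
have hXY : (#|~: X| <= #|~: Y|)%N by apply: subset_leq_card; rewrite setCS.
have allT : forall S, ~: X \subset S -> #|S :|: X| = #|T|.
  move=> S H; suff -> : S :|: X = [set: T] by rewrite cardsT.
  apply/setP => x; rewrite !inE.
  by case: (boolP (x \in X)) => xX; rewrite ?orbT ?orbF //; apply: (subsetP H); rewrite inE.
have allTY : forall S, ~: Y \subset S -> #|S :|: Y| = #|T|.
  move=> S H; suff -> : S :|: Y = [set: T] by rewrite cardsT.
  apply/setP => x; rewrite !inE.
  by case: (boolP (x \in Y)) => xY; rewrite ?orbT ?orbF //; apply: (subsetP H); rewrite inE.
have disj : forall S Z, S \subset ~: Z -> S :&: Z = set0.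
  move=> S Z H; apply/setP => x; rewrite !inE; case: (boolP (x \in S)) => //= xS.
  by have := subsetP H x xS; rewrite inE => /negbTE ->.
case: (leqP t #|~: X|) => h1.
  have h0 : (#|(set0 : {set T})| <= t)%N by rewrite cards0.
  have [S [_ SX St]] := fill (sub0set (~: X)) h0 h1; exists S; split => //.
    by rewrite card_disjU ?disj // St; lia.
  rewrite card_disjU ?St; first lia.
  by apply: disj; apply: subset_trans SX _; rewrite setCS.
case: (leqP t #|~: Y|) => h2.
  have hs : ~: X \subset ~: Y by rewrite setCS.
  have [S [SX SY St]] := fill hs (ltnW h1) h2; exists S; split => //.
    rewrite allT //; lia.
  by rewrite card_disjU ?disj // St; lia.
have [S [SY _ St]] := fill (subsetT (~: Y)) (ltnW h2) (leq_trans tT (eq_leq (esym (cardsT T)))).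
exists S; split => //.
  rewrite allT; first lia.
  by apply: subset_trans SY; rewrite setCS.
rewrite allTY //; lia.
Qed.
End Sets.

Definition Nb (n : nat) (e : rel 'I_n) (v : 'I_n) : {set 'I_n} := [set u | (u == v) || e v u].

Lemma sub_union (n k : nat) (U1 U2 : {set 'I_n}) (F G : 'I_n -> {set 'I_k}) :
  U1 \subset U2 -> (forall j, j \in U1 -> F j = G j) ->
  \bigcup_(j in U1) F j \subset \bigcup_(j in U2) G j.
Proof.
move=> H12 HFG; apply/bigcupsP => j jU1; rewrite HFG //.
by apply: bigcup_sup; apply: (subsetP H12).
Qed.

Lemma ar1 a b c k : (a <= k -> a <= b + c -> a - minn b k <= c)%N.
Proof. lia. Qed.
Lemma ar2 a b c k z : (a <= k -> a <= b + c -> minn k (minn c k + minn b k) <= z -> a <= z)%N.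
Proof. lia. Qed.
Lemma ar3 a t x k z : (a <= k -> a - t <= x -> minn k (x + t) <= z -> a <= z)%N.
Proof. lia. Qed.
Lemma ar4 a b k : (a <= k -> a <= b -> a <= minn b k)%N.
Proof. lia. Qed.

Section Coloring.
Variables (n : nat) (e : rel 'I_n).
Hypothesis esy : forall x y, e x y = e y x.
Hypothesis eirr : forall x, e x x = false.
Hypothesis eac : acyclic e.

Lemma coloring (k : nat) : forall N (U : {set 'I_n}) (u r : 'I_n -> nat), #|U| = N ->
  (forall v, (r v <= k)%N) ->
  (forall v, v \in U -> (r v <= \sum_(j in U :&: Nb e v) u j)%N) ->
  exists C : 'I_n -> {set 'I_k},
    (forall j, j \in U -> #|C j| = minn (u j) k) /\
    (forall v, v \in U -> (r v <= #|\bigcup_(j in U :&: Nb e v) C j|)%N).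
Proof.
elim=> [|N IH] U u r HN Hr Hs.
  by exists (fun _ => set0); split => v; rewrite (cards0_eq HN) inE.
have U0 : U != set0 by apply/eqP => E; rewrite E cards0 in HN.
have [l lU Hl] := leaf_exists eirr eac U0.
set U' := U :\ l.
have HN' : #|U'| = N by move: HN; rewrite (cardsD1 l U) lU add1n => -[].
have U'U : U' \subset U by apply: subsetDl.
have kk : #|'I_k| = k by rewrite card_ord.
have htk : (minn (u l) k <= #|'I_k|)%N by rewrite kk geq_minr.
case: (pickP (fun p => (p \in U) && e l p)) => [p /andP [pU elp] | Hnp].
- have pl : p != l by apply/eqP => E; move: elp; rewrite E eirr.
  have pU' : p \in U' by rewrite !inE pl pU.
  set t := minn (u l) k.
  pose r' v := if v == p then r v - t else r v.
  have Hr' : forall v, (r' v <= k)%N.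
    by move=> v; rewrite /r'; case: eqP => _; [apply: leq_trans (leq_subr _ _) _|]; apply: Hr.
  have Hs' : forall v, v \in U' -> (r' v <= \sum_(j in U' :&: Nb e v) u j)%N.
    move=> v vU'; rewrite /r'; case: eqP => [->|/eqP vp].
      have := Hs p pU; rewrite (bigD1 l) /=; last by rewrite !inE lU esy elp orbT.
      have -> : \sum_(j in U :&: Nb e p | j != l) u j = \sum_(j in U' :&: Nb e p) u j.
        by apply: eq_bigl => j; rewrite !inE; case: (j == l); rewrite ?andbF ?andbT //= andbC.
      by apply: ar1; apply: Hr.
    rewrite (_ : U' :&: Nb e v = U :&: Nb e v); first by apply: Hs; apply: (subsetP U'U).
    apply/setP => j; rewrite !inE; case: (eqVneq j l) => [->|//] /=.
    move: vU'; rewrite !inE => /andP [vl vU]; rewrite lU eq_sym (negbTE vl) /= esy.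
    by apply/esym/negP => elv; move: vp; rewrite (Hl v p vU pU elv elp) eqxx.
  have [C' [HC1 HC2]] := IH U' u r' HN' Hr' Hs'.
  set X := \bigcup_(j in U' :&: Nb e p) C' j.
  have YX : C' p \subset X by apply: bigcup_sup; rewrite !inE pl pU eqxx.
  have [S [St SX SY]] := pick3 YX htk.
  exists (fun j => if j == l then S else C' j); split.
    move=> j jU; case: eqP => [->|/eqP jl]; first by rewrite St.
    by apply: HC1; rewrite !inE jl jU.
  move=> v vU; case: (eqVneq v l) => [->|vl].
    have H1 : S :|: C' p \subset \bigcup_(j in U :&: Nb e l) (if j == l then S else C' j).
      rewrite subUset; apply/andP; split.
        have := bigcup_sup (P := fun j => j \in U :&: Nb e l)
                  (F := fun j => if j == l then S else C' j) l.
        by rewrite eqxx; apply; rewrite !inE lU eqxx.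
      have := bigcup_sup (P := fun j => j \in U :&: Nb e l)
                (F := fun j => if j == l then S else C' j) p.
      by rewrite (negbTE pl); apply; rewrite !inE pU elp orbT.
    apply: leq_trans (subset_leq_card H1).
    have := Hs l lU; rewrite (bigD1 l) /=; last by rewrite !inE lU eqxx.
    rewrite (eq_bigl (pred1 p)); last first.
      move=> j; rewrite !inE /=; case: (eqVneq j p) => [->|jp]; first by rewrite pU pl elp orbT.
      case: (eqVneq j l) => [->|jl]; first by rewrite andbF.
      rewrite andbT /=; apply/negP => /andP [jU elj].
      by move: jp; rewrite (Hl j p jU pU elj elp) eqxx.
    rewrite big_pred1_eq => Hsl; move: SY; rewrite kk HC1 //.
    by apply: ar2 => //; apply: Hr.
  case: (eqVneq v p) => [->|vp].
    have H1 : S :|: X \subset \bigcup_(j in U :&: Nb e p) (if j == l then S else C' j).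
      rewrite subUset; apply/andP; split.
        have := bigcup_sup (P := fun j => j \in U :&: Nb e p)
                  (F := fun j => if j == l then S else C' j) l.
        by rewrite eqxx; apply; rewrite !inE lU esy elp orbT.
      apply: sub_union; first by apply: setSI.
      by move=> j; rewrite !inE => /andP [/andP [jl _] _]; rewrite (negbTE jl).
    apply: leq_trans (subset_leq_card H1).
    have := HC2 p pU'; rewrite /r' eqxx -/X => HX.
    by move: SX; rewrite kk; apply: ar3 HX; apply: Hr.
  have vU' : v \in U' by rewrite !inE vl vU.
  apply: leq_trans (subset_leq_card (sub_union (F := C') (setSI _ U'U) _)).
    by have := HC2 v vU'; rewrite /r' (negbTE vp).
  by move=> j; rewrite !inE => /andP [/andP [jl _] _]; rewrite (negbTE jl).
- have Hs' : forall v, v \in U' -> (r v <= \sum_(j in U' :&: Nb e v) u j)%N.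
    move=> v vU'; rewrite (_ : U' :&: Nb e v = U :&: Nb e v); first by apply: Hs; apply: (subsetP U'U).
    apply/setP => j; rewrite !inE; case: (eqVneq j l) => [->|//] /=.
    move: vU'; rewrite !inE => /andP [vl vU]; rewrite lU eq_sym (negbTE vl) /= esy.
    by have := Hnp v; rewrite vU /= => ->.
  have [C' [HC1 HC2]] := IH U' u r HN' Hr Hs'.
  have htk' : (minn (u l) k <= #|[set: 'I_k]|)%N by rewrite cardsT.
  have [S _ St] := take_set htk'.
  exists (fun j => if j == l then S else C' j); split.
    move=> j jU; case: eqP => [->|/eqP jl]; first by rewrite St.
    by apply: HC1; rewrite !inE jl jU.
  move=> v vU; case: (eqVneq v l) => [->|vl].
    have H1 : S \subset \bigcup_(j in U :&: Nb e l) (if j == l then S else C' j).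
      have := bigcup_sup (P := fun j => j \in U :&: Nb e l)
                (F := fun j => if j == l then S else C' j) l.
      by rewrite eqxx; apply; rewrite !inE lU eqxx.
    apply: leq_trans (subset_leq_card H1).
    have := Hs l lU; rewrite (bigD1 l) /=; last by rewrite !inE lU eqxx.
    rewrite big1; last first.
      move=> j; rewrite !inE; case: (eqVneq j l) => [->|jl]; first by rewrite andbF.
      rewrite andbT => /andP [jU] /=; have := Hnp j; rewrite jU /= => -> //.
    by rewrite St addn0 => Hsl; apply: ar4 Hsl; apply: Hr.
  have vU' : v \in U' by rewrite !inE vl vU.
  apply: leq_trans (subset_leq_card (sub_union (F := C') (setSI _ U'U) _)).
    exact: HC2.
  by move=> j; rewrite !inE => /andP [/andP [jl _] _]; rewrite (negbTE jl).
Qed.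
End Coloring.

Local Open Scope ring_scope.

Section IdealFacts.
Variable R : comRingType.

Lemma ideal_sum (Z : R -> Prop) (I : Type) (r : seq I) (F : I -> R) :
  is_ideal Z -> (forall i, Z (F i)) -> Z (\sum_(i <- r) F i).
Proof.
case=> Z0 ZD ZM H; elim: r => [|a r IH]; first by rewrite big_nil.
by rewrite big_cons; apply: ZD.
Qed.

Lemma ideal_gen_norm (G : R -> Prop) f : ideal_gen G f ->
  exists gs cs : seq R, [/\ size cs = size gs, (forall g, g \in gs -> G g) &
    f = \sum_(i < size gs) cs`_i * gs`_i].
Proof.
move=> [gs [cs [Hg ->]]]; exists gs, (mkseq (fun i => cs`_i) (size gs)).
split => //; first by rewrite size_mkseq.
by apply: eq_bigr => i _; rewrite nth_mkseq.
Qed.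

Lemma ideal_gen_is_ideal (G : R -> Prop) : is_ideal (ideal_gen G).
Proof.
split.
- by exists [::], [::]; split => //; rewrite big_ord0.
- move=> a b /ideal_gen_norm [gs [cs [Hs Hg ->]]] /ideal_gen_norm [gs' [cs' [Hs' Hg' ->]]].
  exists (gs ++ gs'), (cs ++ cs'); split.
    by move=> g; rewrite mem_cat => /orP [] ?; [apply: Hg | apply: Hg'].
  rewrite size_cat big_split_ord /=; congr (_ + _).
    by apply: eq_bigr => i _; rewrite !nth_cat Hs ltn_ord.
  apply: eq_bigr => i _; rewrite !nth_cat Hs.
  by rewrite ltnNge leq_addr /= addKn.
- move=> r a [gs [cs [Hg ->]]]; exists gs, (map (fun c => r * c) cs); split => //.
  rewrite mulr_sumr; apply: eq_bigr => i _.
  case: (ltnP i (size cs)) => Hi.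
    by rewrite (nth_map 0) // mulrA.
  by rewrite (nth_default _ Hi) (@nth_default _ 0 (map (fun c => r * c) cs)) ?size_map // !mul0r mulr0.
Qed.

Lemma ideal_gen_sub (G : R -> Prop) g : G g -> ideal_gen G g.
Proof.
move=> Gg; exists [:: g], [:: 1]; split; first by move=> x; rewrite inE => /eqP ->.
by rewrite big_ord1 /= mul1r.
Qed.

Lemma ideal_gen_min (G Z : R -> Prop) f :
  is_ideal Z -> (forall g, G g -> Z g) -> ideal_gen G f -> Z f.
Proof.
move=> HZ HGZ [gs [cs [Hg ->]]]; case: (HZ) => Z0 ZD ZM.
apply: ideal_sum => // i; apply: ZM; apply: HGZ; apply: Hg.
exact: mem_nth.
Qed.

Lemma prime_prod (P : R -> Prop) (I : eqType) (r : seq I) (F : I -> R) :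
  prime_ideal P -> P (\prod_(i <- r) F i) -> exists2 i, i \in r & P (F i).
Proof.
move=> [_ P1 Pm]; elim: r => [|a r IH]; first by rewrite big_nil.
rewrite big_cons => /Pm [Ha|/IH [i Hi HP]].
  by exists a; rewrite ?inE ?eqxx.
by exists i; rewrite // inE Hi orbT.
Qed.
End IdealFacts.

Lemma ideal_sum_seq (R : comRingType) (Z : R -> Prop) (I : eqType) (r : seq I) (F : I -> R) :
  is_ideal Z -> (forall i, i \in r -> Z (F i)) -> Z (\sum_(i <- r) F i).
Proof.
case=> Z0 ZD ZM; elim: r => [|a r IH] H; first by rewrite big_nil.
rewrite big_cons; apply: ZD; first by apply: H; rewrite inE eqxx.
by apply: IH => i Hi; apply: H; rewrite inE Hi orbT.
Qed.

Lemma seq_argmin (T : eqType) (f : T -> nat) (s : seq T) : s != [::] ->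
  exists2 x, x \in s & forall y, y \in s -> (f x <= f y)%N.
Proof.
elim: s => [|a s IH] // _; case: (eqVneq s [::]) => [->|/IH [x xs Hx]].
  by exists a; rewrite ?inE // => y; rewrite inE => /eqP ->.
case: (leqP (f a) (f x)) => Hax.
  exists a; first by rewrite inE eqxx.
  move=> y; rewrite inE => /orP [/eqP -> //|/Hx]; exact: leq_trans.
exists x; first by rewrite inE xs orbT.
move=> y; rewrite inE => /orP [/eqP -> |/Hx //]; exact: ltnW.
Qed.

Section QDefs.
Variables (K : fieldType) (n : nat).
Implicit Types (p q : {mpoly K[n]}) (A B : {set 'I_n}).

Definition degA A (m : 'X_{1..n}) := (\sum_(j in A) m j)%N.
Definition Q A k p := forall m, m \in msupp p -> (k <= degA A m)%N.
Definition Qup A k p := forall m, m \in msupp p -> (degA A m <= k)%N.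

Lemma degAD A m1 m2 : degA A (m1 + m2)%MM = (degA A m1 + degA A m2)%N.
Proof. by rewrite /degA -big_split; apply: eq_bigr => j _; rewrite mnmDE. Qed.

Lemma degA_sub A B m : A \subset B -> (degA A m <= degA B m)%N.
Proof.
move=> AB; rewrite /degA [X in (_ <= X)%N](bigID (mem A)) /=.
apply: leq_trans (leq_addr _ _); rewrite leq_eqVlt; apply/orP; left; apply/eqP.
apply: eq_bigl => j; case: (boolP (j \in A)) => /= jA; last by rewrite andbF.
by rewrite andbT (subsetP AB).
Qed.

Lemma msuppM_ex p q m : m \in msupp (p * q) ->
  exists m1, exists m2, [/\ m1 \in msupp p, m2 \in msupp q & m = (m1 + m2)%MM].
Proof.
move/msuppM_le/allpairsP => [[m1 m2] /= [H1 H2 ->]]; by exists m1, m2.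
Qed.

Lemma QM A a b p q : Q A a p -> Q A b q -> Q A (a + b) (p * q).
Proof.
move=> Hp Hq m /msuppM_ex [m1 [m2 [H1 H2 ->]]].
by rewrite degAD leq_add // ?Hp ?Hq.
Qed.

Lemma QupM A a b p q : Qup A a p -> Qup A b q -> Qup A (a + b) (p * q).
Proof.
move=> Hp Hq m /msuppM_ex [m1 [m2 [H1 H2 ->]]].
by rewrite degAD leq_add // ?Hp ?Hq.
Qed.

Lemma Q0 A p : Q A 0 p.
Proof. by []. Qed.

Lemma Q_ideal A k : is_ideal (Q A k).
Proof.
split.
- by move=> m; rewrite msupp0.
- move=> a b Ha Hb m /msuppD_le; rewrite mem_cat => /orP [/Ha|/Hb] //.
- move=> r a Ha; rewrite -[k]add0n; exact: QM.
Qed.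

Lemma QX A m : Q A (degA A m) 'X_[m].
Proof. by move=> m'; rewrite msuppX inE => /eqP ->. Qed.

Lemma Q_sub A B k p : A \subset B -> Q A k p -> Q B k p.
Proof. move=> AB H m /H Hm; apply: leq_trans Hm _; exact: degA_sub. Qed.

Lemma Q_le A k k' p : (k' <= k)%N -> Q A k p -> Q A k' p.
Proof. move=> kk H m /H; exact: leq_trans. Qed.

Lemma Q1_sub (Z : {mpoly K[n]} -> Prop) A p :
  is_ideal Z -> (forall j, j \in A -> Z 'X_j) -> Q A 1 p -> Z p.
Proof.
move=> HZ HX Hp; rewrite [p]mpolyE; apply: ideal_sum_seq => // m Hm.
have := Hp m Hm; rewrite /degA lt0n sum_nat_eq0 => /forallPn [j].
rewrite negb_imply => /andP [jA mj].
have Hle : (U_(j) <= m)%MM.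
  apply/mnm_lepP => i; rewrite mnm1E; case: eqP => [<-|]; by rewrite ?lt0n.
rewrite -(submK Hle) mpolyXD; case: HZ => _ _ ZM.
rewrite -mul_mpolyC mulrA; exact: ZM (HX j jA).
Qed.
End QDefs.


Section Prim.
Variables (K : fieldType) (n : nat).
Implicit Types (p q : {mpoly K[n]}) (A B : {set 'I_n}).

Lemma coef_filter (s : seq 'X_{1..n}) (P : pred 'X_{1..n}) (c : 'X_{1..n} -> K) m :
  uniq s -> (\sum_(m' <- s | P m') c m' *: 'X_[m'] : {mpoly K[n]})@_m
            = if (m \in s) && P m then c m else 0.
Proof.
elim: s => [|a s IH] /=; first by rewrite big_nil mcoeff0.
move=> /andP [an us]; rewrite big_cons inE.
case: (eqVneq a m) => [Eam|ne] /=.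
  subst m; case: (P a).
    by rewrite mcoeffD mcoeffZ mcoeffX eqxx mulr1 IH // (negbTE an) addr0.
  by rewrite IH // (negbTE an).
case: (P a); last by rewrite IH.
by rewrite mcoeffD mcoeffZ mcoeffX (negbTE ne) mulr0 add0r IH.
Qed.

Definition low A p d : {mpoly K[n]} :=
  \sum_(m <- msupp p | degA A m == d) p@_m *: 'X_[m].

Lemma low_coef A p d m : (low A p d)@_m = if degA A m == d then p@_m else 0.
Proof.
rewrite /low coef_filter ?msupp_uniq //.
case: (boolP (m \in msupp p)) => //= Hm; rewrite memN_msupp_eq0 //; by case: ifP.
Qed.

Lemma low_supp A p d m : m \in msupp (low A p d) -> degA A m = d.
Proof. by rewrite mcoeff_msupp low_coef; case: (eqVneq (degA A m) d) => // _; rewrite eqxx. Qed.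

Lemma notQ_ex A a p : ~ Q A a p -> exists2 m, m \in msupp p & (degA A m < a)%N.
Proof.
move=> H; case: (boolP (has (fun m => degA A m < a)%N (msupp p))) => [/hasP [m Hm Hd]|/hasPn Hn].
  by exists m.
by exfalso; apply: H => m /Hn; rewrite -leqNgt.
Qed.

Lemma Qprim A a b p q : ~ Q A a p -> ~ Q A b q -> ~ Q A (a + b).-1 (p * q).
Proof.
move=> /notQ_ex [mp Hmp Hdp] /notQ_ex [mq Hmq Hdq].
have [m0 Hm0 Hmin0] : exists2 x, x \in msupp p & forall y, y \in msupp p -> (degA A x <= degA A y)%N.
  by apply: seq_argmin; apply/eqP => E; move: Hmp; rewrite E.
have [m1 Hm1 Hmin1] : exists2 x, x \in msupp q & forall y, y \in msupp q -> (degA A x <= degA A y)%N.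
  by apply: seq_argmin; apply/eqP => E; move: Hmq; rewrite E.
set a0 := degA A m0; set b0 := degA A m1.
have ha0 : (a0 < a)%N by apply: leq_ltn_trans (Hmin0 _ Hmp) Hdp.
have hb0 : (b0 < b)%N by apply: leq_ltn_trans (Hmin1 _ Hmq) Hdq.
set lp := low A p a0; set lq := low A q b0.
have Hhp : Q A a0.+1 (p - lp).
  move=> m; rewrite mcoeff_msupp mcoeffB low_coef.
  case: (eqVneq (degA A m) _) => [_|Hne]; first by rewrite subrr eqxx.
  rewrite subr0 -mcoeff_msupp => Hm; have := Hmin0 _ Hm.
  by rewrite leq_eqVlt => /orP [/eqP E|//]; move: Hne; rewrite /a0 /b0 E eqxx.
have Hhq : Q A b0.+1 (q - lq).
  move=> m; rewrite mcoeff_msupp mcoeffB low_coef.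
  case: (eqVneq (degA A m) _) => [_|Hne]; first by rewrite subrr eqxx.
  rewrite subr0 -mcoeff_msupp => Hm; have := Hmin1 _ Hm.
  by rewrite leq_eqVlt => /orP [/eqP E|//]; move: Hne; rewrite /a0 /b0 E eqxx.
have Hlp : Q A a0 lp by move=> m /low_supp ->.
have Hlq : Q A b0 lq by move=> m /low_supp ->.
have Hulp : Qup A a0 lp by move=> m /low_supp ->.
have Hulq : Qup A b0 lq by move=> m /low_supp ->.
have Hq0 : Q A b0 q by move=> m /Hmin1.
have lp0 : lp != 0.
  by apply/eqP => /mpolyP /(_ m0); rewrite low_coef eqxx mcoeff0 => E; move: Hm0; rewrite mcoeff_msupp E eqxx.
have lq0 : lq != 0.
  by apply/eqP => /mpolyP /(_ m1); rewrite low_coef eqxx mcoeff0 => E; move: Hm1; rewrite mcoeff_msupp E eqxx.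
have lpq0 : lp * lq != 0 by rewrite mulf_neq0.
have [m Hm] : exists m, m \in msupp (lp * lq).
  case E: (msupp (lp * lq)) => [|x s]; last by exists x; rewrite inE eqxx.
  by move: lpq0; rewrite -msupp_eq0 E.
set rest := lp * (q - lq) + (p - lp) * q.
have Hrest : Q A (a0 + b0).+1 rest.
  have [_ RD _] := @Q_ideal K n A (a0 + b0).+1; apply: RD.
    by rewrite -addnS; apply: QM.
  by rewrite -addSn; apply: QM.
have Epq : p * q = lp * lq + rest by rewrite /rest; ring.
have Hdm : (degA A m <= a0 + b0)%N by apply: (QupM Hulp Hulq).
have Hmr : rest@_m = 0.
  apply: memN_msupp_eq0; apply/negP => /Hrest; rewrite ltnNge Hdm //.
move=> HQ; have : m \in msupp (p * q).
  by rewrite mcoeff_msupp Epq mcoeffD Hmr addr0 -mcoeff_msupp.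
move/HQ => H; lia.
Qed.
End Prim.

Section Char.
Variables (K : fieldType) (n : nat) (e : rel 'I_n).
Hypothesis esy : forall x y, e x y = e y x.
Hypothesis eirr : forall x, e x x = false.
Hypothesis eac : acyclic e.

Definition mS (S : {set 'I_n}) : 'X_{1..n} := (\sum_(i in S) U_(i))%MM.

Lemma mSE S j : mS S j = (j \in S).
Proof.
rewrite /mS mnm_sumE; under eq_bigr do rewrite mnm1E.
case: (boolP (j \in S)) => jS.
  rewrite (bigD1 j) //= eqxx big1 // => i /andP [_ ij].
  by rewrite (negbTE ij).
by rewrite big1 // => i iS; case: eqP => // E; move: jS; rewrite -E iS.
Qed.

Lemma prodX_mS (S : {set 'I_n}) : \prod_(i in S) ('X_i : {mpoly K[n]}) = 'X_[mS S].
Proof. by rewrite /mS mprodXE. Qed.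

Lemma degA_ge (A : {set 'I_n}) (m : 'X_{1..n}) j : j \in A -> (m j <= degA A m)%N.
Proof. by move=> jA; rewrite /degA (bigD1 j) //= leq_addr. Qed.

Lemma degA_0 (A : {set 'I_n}) (m : 'X_{1..n}) : (forall j, j \in A -> m j = 0%N) -> degA A m = 0%N.
Proof. by move=> H; rewrite /degA big1. Qed.

Definition J k (g : {mpoly K[n]}) := forall v, Q (Nb e v) k g.

Lemma J_ideal k : is_ideal (J k).
Proof.
split.
- by move=> v; case: (@Q_ideal K n (Nb e v) k).
- by move=> a b Ha Hb v; case: (@Q_ideal K n (Nb e v) k) => _ H _; apply: H.
- by move=> r a Ha v; case: (@Q_ideal K n (Nb e v) k) => _ _ H; apply: H.
Qed.

Lemma dom_gen_J1 S : minimal_dominating e S -> J 1 (\prod_(i in S) 'X_i).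
Proof.
move=> /minsetp /forallP HS v; rewrite prodX_mS => m; rewrite msuppX inE => /eqP ->.
have /existsP [u /andP [uS Hu]] := HS v.
apply: leq_trans (degA_ge _ (j := u) _); first by rewrite mSE uS.
by rewrite inE.
Qed.

Lemma DI_J1 g : @dominating_ideal K n e g -> J 1 g.
Proof.
apply: ideal_gen_min; first exact: J_ideal.
by move=> h [S HS ->]; apply: dom_gen_J1.
Qed.

Lemma J_prod k (gs : seq {mpoly K[n]}) : size gs = k ->
  (forall x, x \in gs -> J 1 x) -> J k (\prod_(x <- gs) x).
Proof.
move=> <-; elim: gs => [|a gs IH] H v; first by rewrite big_nil.
rewrite big_cons /= -add1n; apply: QM.
  by apply: H; rewrite inE eqxx.
by apply: IH => x xg; apply: H; rewrite inE xg orbT.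
Qed.

Lemma pow_J k g : ideal_pow (@dominating_ideal K n e) k g -> J k g.
Proof.
apply: ideal_gen_min; first exact: J_ideal.
move=> h [gs [Hs Hg ->]]; apply: J_prod => // x /Hg; exact: DI_J1.
Qed.


Lemma monom_pow k (m : 'X_{1..n}) : (forall v, (k <= degA (Nb e v) m)%N) ->
  ideal_pow (@dominating_ideal K n e) k 'X_[m].
Proof.
move=> Hm.
have Hs : forall v, v \in [set: 'I_n] ->
    ((fun _ => k) v <= \sum_(j in [set: 'I_n] :&: Nb e v) m j)%N.
  by move=> v _; rewrite setTI; apply: Hm.
have [C [HC1 HC2]] := coloring esy eirr eac (erefl #|[set: 'I_n]|) (fun _ => leqnn k) Hs.
have cover : forall v (i : 'I_k), exists2 j, j \in Nb e v & i \in C j.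
  move=> v i.
  have E : \bigcup_(j in [set: 'I_n] :&: Nb e v) C j = [set: 'I_k].
    apply/eqP; rewrite eqEcard subsetT cardsT card_ord; exact: HC2.
  have : i \in \bigcup_(j in [set: 'I_n] :&: Nb e v) C j by rewrite E inE.
  by case/bigcupP => j; rewrite setTI => jv iC; exists j.
pose D (i : 'I_k) := [set j | i \in C j].
have domD : forall i, dominating e (D i).
  move=> i; apply/forallP => v; have [j jv iC] := cover v i.
  by apply/existsP; exists j; rewrite inE iC /=; move: jv; rewrite inE.
pose M i := s2val (minset_exists (domD i)).
have MD : forall i, M i \subset D i by move=> i; rewrite /M; case: minset_exists.
have Mmin : forall i, minimal_dominating e (M i) by move=> i; rewrite /M; case: minset_exists.
set s := (\sum_(i < k) mS (M i))%MM.
have sm : (s <= m)%MM.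
  apply/mnm_lepP => j; rewrite /s mnm_sumE.
  apply: (@leq_trans (\sum_(i < k) (i \in C j))).
    apply: leq_sum => i _; rewrite mSE; case: (boolP (j \in M i)) => // /(subsetP (MD i)).
    by rewrite inE => ->.
  rewrite (eq_bigr (fun i => if i \in C j then 1 else 0)%N); last by move=> i _; case: (_ \in _).
  by rewrite -big_mkcond sum1_card HC1 ?inE // geq_minl.
rewrite -(submK sm) mpolyXD.
have [_ _ ZM] := ideal_gen_is_ideal (fun g : {mpoly K[n]} => exists gs : seq {mpoly K[n]},
     [/\ size gs = k, (forall x, x \in gs -> @dominating_ideal K n e x) & g = \prod_(x <- gs) x]).
apply: ZM; apply: ideal_gen_sub.
exists [seq \prod_(j in M i) 'X_j | i <- enum 'I_k]; split.
- by rewrite size_map size_enum_ord.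
- move=> x /mapP [i _ ->]; apply: ideal_gen_sub; by exists (M i).
- rewrite big_map big_enum /= /s -mprodXE; apply: eq_bigr => i _; by rewrite prodX_mS.
Qed.

Lemma J_pow k g : J k g -> ideal_pow (@dominating_ideal K n e) k g.
Proof.
move=> Hg; rewrite [g]mpolyE; apply: ideal_sum_seq; first exact: ideal_gen_is_ideal.
move=> m Hm; rewrite -mul_mpolyC; have [_ _ ZM] := ideal_gen_is_ideal
  (fun g : {mpoly K[n]} => exists gs : seq {mpoly K[n]},
     [/\ size gs = k, (forall x, x \in gs -> @dominating_ideal K n e x) & g = \prod_(x <- gs) x]).
by apply: ZM; apply: monom_pow => v; apply: Hg.
Qed.

Lemma J1_DI g : J 1 g -> @dominating_ideal K n e g.
Proof.
move/J_pow; apply: ideal_gen_min; first exact: ideal_gen_is_ideal.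
move=> h [[|x [|y gs]] [//= _ Hx ->]].
by rewrite big_cons big_nil mulr1; apply: Hx; rewrite inE eqxx.
Qed.

End Char.

Section Main.
Variables (K : fieldType) (n : nat) (e : rel 'I_n).
Hypothesis esy : forall x y, e x y = e y x.
Hypothesis eirr : forall x, e x x = false.
Hypothesis eac : acyclic e.

Lemma prime_pow (P : {mpoly K[n]} -> Prop) x k : prime_ideal P -> P (x ^+ k) -> P x.
Proof.
case=> _ P1 Pm; elim: k => [|k IH]; first by rewrite expr0.
by rewrite exprS => /Pm [].
Qed.

Lemma build_h (P : {mpoly K[n]} -> Prop) k (vs : seq 'I_n) : prime_ideal P ->
  (forall v, v \in vs -> exists2 j, j \in Nb e v & ~ P 'X_j) ->
  exists h, ~ P h /\ forall v, v \in vs -> Q (Nb e v) k h.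
Proof.
move=> HP; elim: vs => [|v vs IH] H.
  by exists 1; split => //; case: HP => _ P1 _.
have [h [Ph Hh]] : exists h, ~ P h /\ forall v, v \in vs -> Q (Nb e v) k h.
  by apply: IH => w wv; apply: H; rewrite inE wv orbT.
have [j jv Pj] := H v (mem_head _ _).
exists (h * 'X_j ^+ k); split.
  have [_ _ Pm] := HP; move=> /Pm [//|H1]; apply: Pj; exact: (prime_pow HP H1).
move=> w; rewrite inE => /orP [/eqP ->|wv].
  rewrite -[k]add0n; apply: QM => //; rewrite mpolyXn.
  move=> m; rewrite msuppX inE => /eqP ->; apply: leq_trans (degA_ge _ jv).
  by rewrite mulmnE mnm1E eqxx mul1n add0n.
rewrite -[k]addn0; apply: QM => //; exact: Hh.
Qed.

Theorem main_ntf : normally_torsion_free (@dominating_ideal K n e).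
Proof.
move=> k k1 P [HP [f Hf]].
have Hf' : forall g, P g <-> J e k (g * f).
  move=> g; rewrite Hf; split; [exact: pow_J | exact: J_pow].
have nJf : ~ J e k f by move/(J_pow esy eirr eac); rewrite -[f]mul1r -Hf; case: HP => _ P1 _.
have Qb : forall A k p, Q A k p <-> all (fun m => (k <= degA A m)%N) (msupp p).
  by move=> A k' p; split => [H|/allP H //]; apply/allP.
have [v0 [nQ0 Pv0]] : exists v0, ~ Q (Nb e v0) k f /\ forall j, j \in Nb e v0 -> P 'X_j.
  apply: NNPP => Hno.
  pose vs := [seq v <- enum 'I_n | ~~ all (fun m => (k <= degA (Nb e v) m)%N) (msupp f)].
  have Hvs : forall v, v \in vs -> exists2 j, j \in Nb e v & ~ P 'X_j.
    move=> v; rewrite mem_filter => /andP [nv _].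
    apply: NNPP => H2; apply: Hno; exists v; split; first by rewrite Qb; apply/negP.
    move=> j jv; apply: NNPP => Pj; apply: H2; by exists j.
  have [h [Ph Hh]] := build_h k HP Hvs.
  apply: Ph; apply/Hf' => v.
  case: (boolP (v \in vs)) => vv.
    rewrite -[k]addn0; apply: QM; [exact: Hh | exact: Q0].
  rewrite -[k]add0n; apply: QM; first exact: Q0.
  by apply/Qb; move: vv; rewrite mem_filter mem_enum andbT negbK.
case: (@arg_minnP _ v0 (fun w => Nb e w \subset Nb e v0) (fun w => #|Nb e w|) (subxx (Nb e v0))) => v1 Hv1 Hmin.
have Pv1 : forall j, j \in Nb e v1 -> P 'X_j by move=> j /(subsetP Hv1); apply: Pv0.
have nQ1 : ~ Q (Nb e v1) k f by move=> H; apply: nQ0; apply: Q_sub Hv1 H.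
have minimal : forall w, Nb e w \subset Nb e v1 -> Nb e w = Nb e v1.
  move=> w Hw; apply/eqP; rewrite eqEcard Hw /=; apply: Hmin.
  exact: subset_trans Hw Hv1.
have [HPi P1 Pm] := HP.
have Pchar : forall g, P g <-> Q (Nb e v1) 1 g.
  move=> g; split => [Pg|]; last by apply: Q1_sub.
  apply: NNPP => nQg; have := Qprim nQg nQ1; rewrite add1n /=; apply.
  by move/Hf': Pg; apply.
pose f' : {mpoly K[n]} := 'X_[mS (~: Nb e v1)].
have nQf' : ~ Q (Nb e v1) 1 f'.
  move=> H; have := H (mS (~: Nb e v1)); rewrite msuppX mem_head => /(_ isT).
  by rewrite degA_0 // => j jv; rewrite mSE inE jv.
split => //; exists f' => g; rewrite Pchar; split => [Hg|].
  apply: J1_DI => // w; case: (boolP (Nb e w \subset Nb e v1)) => Hw.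
    rewrite (minimal w Hw) -[1%N]addn0; apply: QM => //; exact: Q0.
  case/subsetPn: Hw => j jw jv.
  rewrite -[1%N]add0n; apply: QM; first exact: Q0.
  move=> m; rewrite msuppX inE => /eqP ->; apply: leq_trans (degA_ge _ jw).
  by rewrite mSE inE jv.
move/(DI_J1 (e := e))/(_ v1) => H; apply: NNPP => nQg.
by have := Qprim nQg nQf'; apply.
Qed.
End Main.

Theorem corollary2p19 (K : fieldType) (n : nat) (e : rel 'I_n) :
  is_tree e -> normally_torsion_free (@dominating_ideal K n e).
Proof. by case=> [[esy eirr] _ eac]; apply: main_ntf. Qed.
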